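(* Let $H$ and $\Xi^*$ be either ($H_D$, $\Xi^+$), ($H_A$, $\Xi^+$), or ($H_{E_k}$, $\Xi$), with corresponding criterion $\phi\in\{\phi_D,\phi_A,\phi_{E_k}\}$. Let $\Xi'\subseteq\Xi^*$ be a finite nonempty set, and let $(\xi',t')$ be an optimal solution of the linear program: maximize $t$ over $\xi\in\Xi$, $t\in\mathbb{R}$, subject to $\sum_{x\in\mathcal{X}}H(\mu,x)\xi(x)\ge t$ for all $\mu\in\Xi'$. If $\xi'\in\Xi^*$, then $$\phi(\xi')\le \sup_{\xi\in\Xi^*}\phi(\xi)\le t'.$$
   Context: $\mathcal{X}$ finite, $f:\mathcal{X}\to\mathbb{R}^p$, $\Xi$ the probability measures on $\mathcal{X}$, $M(\xi)=\sum_x f(x)f^\top(x)\xi(x)$, $\Xi^+=\{\mu\in\Xi: M(\mu)\text{ nonsingular}\}$. $\phi_D(\xi)=\det^{1/p}M(\xi)$, $\phi_A(\xi)=1/\mathrm{tr}M^{-1}(\xi)$ (on $\Xi^+$), $\phi_{E_k}(\xi)$ = sum of the $k$ smallest eigenvalues of $M(\xi)$. $H_D(\mu,x)=\frac{\det^{1/p}[M(\mu)]}{p}f^\top(x)M^{-1}(\mu)f(x)$, $H_A(\mu,x)=\|M^{-1}(\mu)f(x)\|^2/[\mathrm{tr}M^{-1}(\mu)]^2$, $H_{E_k}(\mu,x)=\|P^{(k)}(\mu)f(x)\|^2$, where $P^{(k)}(\mu)=\sum_{i=1}^k u_iu_i^\top$ for an orthonormal eigenbasis $u_1,\dots,u_p$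 of $M(\mu)$ ordered by increasing eigenvalues. *)

(* Defs.v *)
From HB Require Import structures.
From mathcomp Require Import all_boot all_order all_algebra.
From Stdlib Require Import ClassicalEpsilon.
Set Implicit Arguments. Unset Strict Implicit. Unset Printing Implicit Defensive.
Import Order.TTheory GRing.Theory Num.Theory.
Local Open Scope ring_scope.

Section OptDesign.
Variables (R : rcfType) (X : finType) (p : nat) (f : X -> 'cV[R]_p).

Definition design := {ffun X -> R}.
Definition in_Xi (xi : design) : Prop := (forall x, 0 <= xi x) /\ \sum_x xi x = 1.

Definition Minf (xi : design) : 'M[R]_p := \sum_x xi x *: (f x *m (f x)^T).

Definition in_Xiplus (xi : design) : Prop := in_Xi xi /\ Minf xi \in unitmx.

(* the nonnegative n-th root of a (exists for a >= 0, n > 0 in a rcf) *)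
Definition proot (n : nat) (a : R) : R :=
  epsilon (inhabits 0) (fun y => 0 <= y /\ y ^+ n = a).

Definition eigvals (A : 'M[R]_p) : seq R :=
  epsilon (inhabits [::])
    (fun s : seq R => sorted <=%R s /\ char_poly A = \prod_(a <- s) ('X - a%:P)).

Definition phi_D (xi : design) : R := proot p (\det (Minf xi)).
Definition phi_A (xi : design) : R := 1 / \tr (invmx (Minf xi)).
Definition phi_E (k : nat) (xi : design) : R := \sum_(i < k) (eigvals (Minf xi))`_i.

Definition sqnorm (v : 'cV[R]_p) : R := \sum_i v i 0 ^+ 2.

Definition H_D (mu : design) (x : X) : R :=
  proot p (\det (Minf mu)) / p%:R * ((f x)^T *m invmx (Minf mu) *m f x) 0 0.
Definition H_A (mu : design) (x : X) : R :=
  sqnorm (invmx (Minf mu) *m f x) / (\tr (invmx (Minf mu))) ^+ 2.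

Definition ordered_eigenbasis (A V : 'M[R]_p) : Prop :=
  V^T *m V = 1%:M /\
  exists d : 'rV[R]_p,
    (forall i j : 'I_p, (i <= j)%N -> d 0 i <= d 0 j) /\ A *m V = V *m diag_mx d.

Definition Pk (k : nat) (V : 'M[R]_p) : 'M[R]_p :=
  \sum_(i < p | (i < k)%N) (col i V *m (col i V)^T).

(* H_{E_k}, given a choice V mu of ordered orthonormal eigenbasis of M(mu) *)
Definition H_E (k : nat) (V : design -> 'M[R]_p) (mu : design) (x : X) : R :=
  sqnorm (Pk k (V mu) *m f x).

Definition lp_feasible (Xs : seq design) (H : design -> X -> R) (xi : design) (t : R) : Prop :=
  in_Xi xi /\ forall mu, mu \in Xs -> t <= \sum_x H mu x * xi x.
Definition lp_optimal (Xs : seq design) (H : design -> X -> R) (xi : design) (t : R) : Prop :=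
  lp_feasible Xs H xi t /\
  forall (xi2 : design) (t2 : R), lp_feasible Xs H xi2 t2 -> t2 <= t.

End OptDesign.

(* Main.v *)
Require Import Defs.
From HB Require Import structures.
From mathcomp Require Import all_boot all_order all_algebra.
From mathcomp Require Import complex.
From mathcomp Require Import zify ring lra.
From Stdlib Require Import ClassicalEpsilon.
Set Implicit Arguments. Unset Strict Implicit. Unset Printing Implicit Defensive.
Import Order.TTheory GRing.Theory Num.Theory.
Local Open Scope ring_scope.

Lemma proot_spec (R : rcfType) (n : nat) (a : R) :
  (0 < n)%N -> 0 <= a -> 0 <= proot n a /\ proot n a ^+ n = a.
Proof.
move=> n0 a0; rewrite /proot; apply epsilon_spec.
have := @poly_ivt R ('X^n - a%:P) 0 (1 + a).
rewrite !hornerE expr0n eqn0Ngt n0 /= sub0r oppr_le0 a0 /=.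
have h1 : 0 <= 1 + a by rewrite addr_ge0.
case=> // [|y /andP[y0 _] ry]; last first.
  by exists y; split=> //; move: ry; rewrite /root !hornerE subr_eq0 => /eqP.
rewrite subr_ge0; case: n n0 => // m _; rewrite exprS.
apply: (le_trans (y := 1 + a)); first by rewrite lerDr.
by rewrite ler_peMr // exprn_ege1 // lerDl.
Qed.

Lemma Minf_sym (R : rcfType) (X : finType) (p : nat) (f : X -> 'cV[R]_p) (xi : design R X) :
  (Minf f xi)^T = Minf f xi.
Proof.
rewrite /Minf raddf_sum /=; apply: eq_bigr => x _.
by rewrite linearZ /= trmx_mul trmxK.
Qed.

Lemma sum_quad (R : rcfType) (X : finType) (p : nat) (f : X -> 'cV[R]_p) (xi : design R X)
  (A : 'M[R]_p) :
  \sum_x ((f x)^T *m A *m f x) 0 0 * xi x = \tr (A *m Minf f xi).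
Proof.
rewrite /Minf mulmx_sumr raddf_sum /=; apply: eq_bigr => x _.
rewrite -scalemxAr linearZ /= mulrC; congr (_ * _).
by rewrite mulmxA mxtrace_mulC mulmxA /mxtrace big_ord1.
Qed.

Lemma sqnormE (R : rcfType) (p : nat) (v : 'cV[R]_p) :
  sqnorm v = (v^T *m v) 0 0.
Proof. by rewrite /sqnorm mxE; apply: eq_bigr => i _; rewrite !mxE expr2. Qed.

Lemma sum_sqnorm (R : rcfType) (X : finType) (p : nat) (f : X -> 'cV[R]_p) (xi : design R X)
  (Y : 'M[R]_p) :
  \sum_x sqnorm (Y *m f x) * xi x = \tr (Y^T *m Y *m Minf f xi).
Proof.
rewrite -sum_quad; apply: eq_bigr => x _.
by rewrite sqnormE trmx_mul !mulmxA.
Qed.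

Lemma sqnorm_ge0 (R : rcfType) (p : nat) (v : 'cV[R]_p) : 0 <= sqnorm v.
Proof. by apply: sumr_ge0 => i _; rewrite sqr_ge0. Qed.

Notation toC R := (real_complex R).
Notation MC R A := (map_mx (real_complex R) A).

Lemma conj_toC (R : rcfType) (x : R) : (toC R x)^* = toC R x.
Proof. by apply: conj_Creal; apply/complex_realP; exists x. Qed.

Definition psdC (R : rcfType) (p : nat) (K : 'M[R]_p) :=
  forall v : 'rV[R[i]]_p,
    0 <= (v *m MC R K *m (map_mx Num.conj v)^T) 0 0 /\
    ((v *m MC R K *m (map_mx Num.conj v)^T) 0 0 = 0 -> v *m MC R K = 0).

Lemma psdC_1 (R : rcfType) (p : nat) : psdC (1%:M : 'M[R]_p).
Proof.
move=> v; rewrite map_mx1 mulmx1.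
have E : (v *m (map_mx Num.conj v)^T) 0 0 = \sum_i v 0 i * (v 0 i)^*.
  by rewrite mxE; apply: eq_bigr => i _; rewrite !mxE.
rewrite E; split; first by apply: sumr_ge0 => i _; exact: mul_conjC_ge0.
move=> /psumr_eq0P H; apply/rowP => i; rewrite mxE.
by apply/eqP; rewrite -mul_conjC_eq0; apply/eqP; apply: H => // j _; exact: mul_conjC_ge0.
Qed.

Lemma MC_Minf (R : rcfType) (X : finType) (p : nat) (f : X -> 'cV[R]_p)
  (xi : design R X) :
  MC R (Minf f xi) = \sum_x toC R (xi x) *: (MC R (f x) *m (MC R (f x))^T).
Proof.
rewrite /Minf map_mx_sum; apply: eq_bigr => x _.
by rewrite map_mxZ map_mxM map_trmx.
Qed.

Lemma psdC_Minf (R : rcfType) (X : finType) (p : nat) (f : X -> 'cV[R]_p)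
  (xi : design R X) : (forall x, 0 <= xi x) -> psdC (Minf f xi).
Proof.
move=> xi0 v; set w := (map_mx Num.conj v)^T.
pose z x := (v *m MC R (f x)) 0 0.
have Ez x : ((MC R (f x))^T *m w) 0 0 = (z x)^*.
  rewrite /z !mxE rmorph_sum; apply: eq_bigr => i _.
  by rewrite !mxE rmorphM /= conj_toC mulrC.
have Eq : (v *m MC R (Minf f xi) *m w) 0 0 =
          \sum_x toC R (xi x) * (z x * (z x)^*).
  rewrite MC_Minf mulmx_sumr mulmx_suml summxE; apply: eq_bigr => x _.
  rewrite -scalemxAr -scalemxAl mxE; congr (_ * _).
  by rewrite !mulmxA -(mulmxA (v *m _)) -/(z x) mxE big_ord1 Ez.
have T0 x : 0 <= toC R (xi x) * (z x * (z x)^*).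
  by rewrite mulr_ge0 ?mul_conjC_ge0 // ler0c.
rewrite Eq; split; first by apply: sumr_ge0 => x _.
move=> /psumr_eq0P H.
rewrite MC_Minf mulmx_sumr; apply: big1 => x _.
have := H (fun y _ => T0 y) x isT => /eqP; rewrite mulf_eq0 mul_conjC_eq0.
case/orP=> /eqP Hx; first by rewrite -scalemxAr Hx scale0r.
rewrite -scalemxAr mulmxA.
have -> : v *m MC R (f x) = 0 by apply/matrixP => i j; rewrite !ord1 [RHS]mxE; exact: Hx.
by rewrite mul0mx scaler0.
Qed.

Lemma eig_ge0 (R : rcfType) (p : nat) (G K : 'M[R]_p) :
  psdC G -> psdC K -> K \in unitmx ->
  forall r, eigenvalue (MC R (G *m invmx K)) r -> 0 <= r.
Proof.
move=> pG pK uK r /eigenvalueP [v Hv v0].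
have uKC : MC R K \in unitmx by rewrite map_unitmx.
have Hv2 : v *m MC R G = r *: (v *m MC R K).
  by rewrite scalemxAl -Hv map_mxM map_invmx !mulmxA mulmxKV.
set w := (map_mx Num.conj v)^T.
have Eq : (v *m MC R G *m w) 0 0 = r * (v *m MC R K *m w) 0 0.
  by rewrite Hv2 -scalemxAl mxE.
have [qG0 _] := pG v; have [qK0 qKz] := pK v.
have qKn : (v *m MC R K *m w) 0 0 != 0.
  apply/eqP => /qKz vK; move: v0; rewrite -(mulmxK uKC v) vK mul0mx eqxx //.
have qKp : 0 < (v *m MC R K *m w) 0 0 by rewrite lt_def qKn qK0.
have -> : r = (v *m MC R G *m w) 0 0 / (v *m MC R K *m w) 0 0.
  by rewrite Eq mulfK.
exact: (divr_ge0 qG0 (ltW qKp)).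
Qed.

Lemma split_real (R : rcfType) (p : nat) (A : 'M[R]_p) :
  (forall r, eigenvalue (MC R A) r -> 0 <= r) ->
  exists s : seq R, [/\ size s = p, all (fun a => 0 <= a) s &
    char_poly A = \prod_(a <- s) ('X - a%:P)].
Proof.
move=> H.
have [rs Hrs] := closed_field_poly_normal (char_poly (MC R A)).
rewrite (monicP (char_poly_monic _)) scale1r in Hrs.
have Hz z : z \in rs -> 0 <= z /\ toC R (complex.Re z) = z.
  move=> zin; have : root (char_poly (MC R A)) z by rewrite Hrs root_prod_XsubC.
  rewrite -eigenvalue_root_char => /H z0; split=> //.
  by apply: RRe_real; exact: ger0_real.
exists (map (@complex.Re R) rs); split.
- have := size_char_poly (MC R A); rewrite Hrs size_prod_XsubC size_map.
  by case.
- apply/allP => a /mapP [z zin ->]; have [z0 zE] := Hz z zin.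
  by rewrite -ler0c zE.
- apply: (map_poly_inj (real_complex R)).
  rewrite map_char_poly Hrs map_prod_XsubC big_map.
  by apply: eq_big_seq => z zin; have [_ zE] := Hz z zin; rewrite -[in LHS]zE.
Qed.

Lemma split_det_tr (R : rcfType) (p : nat) (A : 'M[R]_p) (s : seq R) :
  (0 < p)%N -> size s = p -> char_poly A = \prod_(a <- s) ('X - a%:P) ->
  \det A = \prod_(a <- s) a /\ \tr A = \sum_(a <- s) a.
Proof.
move=> p0 sz E; split.
  have := char_poly_det A; rewrite E coef0_prod_XsubC sz => /mulfI.
  by move=> h; apply/esym/h; rewrite signr_eq0.
have h := @coefPn_prod_XsubC _ s; rewrite sz -lt0n p0 in h.
by have := char_poly_trace A p0; rewrite E h // => /oppr_inj.
Qed.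


Lemma AGM_seq (R : rcfType) (s : seq R) :
  all (fun a => 0 <= a) s ->
  \prod_(a <- s) a <= ((\sum_(a <- s) a) / (size s)%:R) ^+ (size s).
Proof.
move=> s0.
have H0 : {in predT, forall i : 'I_(size s), 0 <= s`_i}.
  by move=> i _; apply: (allP s0); apply: mem_nth.
have := @leif_AGM R 'I_(size s) predT (fun i => s`_i) H0.
case=> le _; move: le; rewrite card_ord.
by rewrite [\prod_(_ <- s) _](big_nth 0) [\sum_(_ <- s) _](big_nth 0) !big_mkord.
Qed.

Lemma key_psd (R : rcfType) (p : nat) (G K : 'M[R]_p) :
  (0 < p)%N -> psdC G -> psdC K -> K \in unitmx ->
  [/\ 0 <= \det (G *m invmx K), 0 <= \tr (G *m invmx K) &
      \det (G *m invmx K) <= (\tr (G *m invmx K) / p%:R) ^+ p].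
Proof.
move=> p0 pG pK uK.
have [s [sz s0 E]] := split_real (eig_ge0 pG pK uK).
have [-> ->] := split_det_tr p0 sz E.
split.
- rewrite big_seq; apply: prodr_ge0 => a ain; exact: (allP s0).
- rewrite big_seq; apply: sumr_ge0 => a ain; exact: (allP s0).
- by rewrite -sz; apply: AGM_seq.
Qed.

Lemma form_expand (R : rcfType) (p : nat) (P X Y : 'M[R]_p) (s : R) :
  \tr ((X - s *: Y) *m P *m (X - s *: Y)^T) =
  \tr (X *m P *m X^T) - s * \tr (X *m P *m Y^T) - s * \tr (Y *m P *m X^T)
  + s ^+ 2 * \tr (Y *m P *m Y^T).
Proof.
have -> : (X - s *: Y)^T = X^T - s *: Y^T.
  by apply/matrixP => i j; rewrite !mxE.
rewrite !mulmxBl !mulmxBr -!scalemxAl -!scalemxAr.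
rewrite !raddfB /= !linearZ /=.
ring.
Qed.

Lemma trace_pos (R : rcfType) (p : nat) (K : 'M[R]_p) :
  (0 < p)%N -> psdC K -> K \in unitmx -> 0 < \tr (invmx K).
Proof.
move=> p0 pK uK.
have [d0 t0 le] := key_psd p0 (@psdC_1 R p) pK uK.
rewrite mul1mx in d0 t0 le.
rewrite lt_def t0 andbT; apply/eqP => t00.
move: le; rewrite t00 mul0r expr0n eqn0Ngt p0 /= => le.
have : \det (invmx K) = 0 by apply/eqP; rewrite eq_le le d0.
by apply/eqP; rewrite det_inv invr_eq0; move: uK; rewrite unitmxE unitfE.
Qed.

Lemma A_bound (R : rcfType) (X : finType) (p : nat) (f : X -> 'cV[R]_p)
  (mu xi : design R X) :
  (0 < p)%N -> in_Xiplus f mu -> in_Xiplus f xi ->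
  phi_A f xi <= \sum_x H_A f mu x * xi x.
Proof.
move=> p0 [[mu0 _] uN] [[xi0 _] uP].
set N := Minf f mu; set P := Minf f xi.
have pN := psdC_Minf f mu0; have pP := psdC_Minf f xi0.
set Ni := invmx N; set Pi := invmx P.
have ap : 0 < \tr Ni := trace_pos p0 pN uN.
have cp : 0 < \tr Pi := trace_pos p0 pP uP.
set a := \tr Ni; set c := \tr Pi.
set b := \tr (Ni *m P *m Ni^T).
have E : \sum_x H_A f mu x * xi x = b / a ^+ 2.
  rewrite /b mxtrace_mulC mulmxA -sum_sqnorm mulr_suml.
  by apply: eq_bigr => x _; rewrite /H_A mulrAC.
rewrite E /phi_A -/P -/Pi -/c.
have PT : P^T = P := Minf_sym f xi.
have NiT : Ni^T = Ni by rewrite /Ni trmx_inv Minf_sym.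
have PiT : Pi^T = Pi by rewrite /Pi trmx_inv Minf_sym.
have B1 : \tr (Ni *m P *m Pi^T) = a by rewrite PiT -mulmxA mulmxV // mulmx1.
have B2 : \tr (Pi *m P *m Ni^T) = a by rewrite NiT mulVmx // mul1mx.
have B3 : \tr (Pi *m P *m Pi^T) = c by rewrite PiT mulVmx // mul1mx.
have G0 : 0 <= \tr ((Ni - (a / c) *: Pi) *m P *m (Ni - (a / c) *: Pi)^T).
  set Y := Ni - (a / c) *: Pi.
  rewrite mxtrace_mulC mulmxA -sum_sqnorm.
  by apply: sumr_ge0 => x _; rewrite mulr_ge0 // ?sqnorm_ge0.
rewrite form_expand B1 B2 B3 -/b in G0.
have cn : c != 0 by rewrite gt_eqF.
have an : a != 0 by rewrite gt_eqF.
have H : a ^+ 2 / c <= b.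
  suff -> : a ^+ 2 / c = b - (b - a / c * a - a / c * a + (a / c) ^+ 2 * c) by rewrite gerBl.
  by field.
have -> : 1 / c = (a ^+ 2 / c) / a ^+ 2.
  by field; rewrite ?expf_neq0 ?an ?cn.
by apply: ler_wpM2r => //; rewrite invr_ge0 exprn_ge0 // ltW.
Qed.

Lemma D_bound (R : rcfType) (X : finType) (p : nat) (f : X -> 'cV[R]_p)
  (mu xi : design R X) :
  (0 < p)%N -> in_Xiplus f mu -> in_Xiplus f xi ->
  phi_D f xi <= \sum_x H_D f mu x * xi x.
Proof.
move=> p0 [[mu0 _] uN] [[xi0 _] uP].
set N := Minf f mu; set P := Minf f xi.
have pN := psdC_Minf f mu0; have pP := psdC_Minf f xi0.
have E : \sum_x H_D f mu x * xi x =
         proot p (\det N) / p%:R * \tr (invmx N *m P).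
  rewrite -sum_quad mulr_sumr; apply: eq_bigr => x _.
  by rewrite /H_D mulrA.
rewrite E /phi_D -/P mxtrace_mulC.
have [d0 t0 le] := key_psd p0 pP pN uN.
have [dN0 _ _] := key_psd p0 pN (@psdC_1 R p) (unitmx1 _ _).
rewrite invmx1 mulmx1 in dN0.
have dNn : \det N != 0 by move: uN; rewrite unitmxE unitfE.
have dNp : 0 < \det N by rewrite lt_def dNn dN0.
have EdP : \det P = \det (P *m invmx N) * \det N.
  by rewrite det_mulmx det_inv mulfVK.
have dP0 : 0 <= \det P by rewrite EdP mulr_ge0.
have [yP0 yPE] := proot_spec p0 dP0.
have [yN0 yNE] := proot_spec p0 dN0.
set T := \tr (P *m invmx N) in t0 le *.
have rhs0 : 0 <= proot p (\det N) / p%:R * T.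
  by rewrite mulr_ge0 // divr_ge0 // ler0n.
rewrite -(ler_pXn2r p0) ?nnegrE //.
rewrite yPE -mulrA exprMn yNE EdP [X in X <= _]mulrC.
apply: ler_wpM2l => //; by rewrite mulrC.
Qed.

Lemma char_poly_similar (F : fieldType) (n : nat) (P A : 'M[F]_n) :
  P \in unitmx -> char_poly (invmx P *m A *m P) = char_poly A.
Proof.
move=> uP; rewrite /char_poly /char_poly_mx.
have -> : 'X%:M - map_mx polyC (invmx P *m A *m P) =
  map_mx polyC (invmx P) *m ('X%:M - map_mx polyC A) *m map_mx polyC P.
  rewrite mulmxBr mulmxBl mul_mx_scalar -scalemxAl -map_mxM mulVmx // map_mx1 scalemx1.
  by rewrite !map_mxM.
rewrite !det_mulmx !det_map_mx mulrC mulrA -rmorphM /= -det_mulmx.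
by rewrite mulmxV // det1 rmorph1 mul1r.
Qed.

Lemma char_poly_diag (R : comNzRingType) (n : nat) (d : 'rV[R]_n) :
  char_poly (diag_mx d) = \prod_(j < n) ('X - (d 0 j)%:P).
Proof.
rewrite char_poly_trig ?diag_mx_is_trig //.
by apply: eq_bigr => j _; rewrite mxE eqxx mulr1n.
Qed.

Lemma spec_real (R : rcfType) (p : nat) (M : 'M[R]_p) : M^T = M ->
  exists (Q : 'M[R[i]]_p) (a : 'I_p -> R),
   [/\ Q *m (map_mx Num.conj Q^T) = 1%:M,
       MC R M = map_mx Num.conj Q^T *m diag_mx (\row_j toC R (a j)) *m Q &
       char_poly M = \prod_j ('X - (a j)%:P)].
Proof.
move=> MT; set A := MC R M.
have hA : A \is hermsymmx.
  apply/is_hermitianmxP; rewrite expr0 scale1r.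
  apply/matrixP => i j; rewrite !mxE conj_toC.
  by rewrite -[in LHS]MT mxE.
have /orthomx_spectralP EA := hermitian_normalmx hA.
have Qu := spectral_unitarymx A.
have dreal := hermitian_spectral_diag_real hA.
set Q := spectralmx A in EA Qu; set d := spectral_diag A in EA dreal.
have Ea j : toC R (complex.Re (d 0 j)) = d 0 j.
  by apply: RRe_real; move/mxOverP: dreal; apply.
have dE : d = \row_j toC R (complex.Re (d 0 j)).
  by apply/rowP => j; rewrite mxE Ea.
exists Q, (fun j => complex.Re (d 0 j)); split.
- exact/unitarymxP.
- by rewrite -dE -invmx_unitary.
- apply: (map_poly_inj (real_complex R)).
  rewrite map_char_poly -/A {1}EA char_poly_similar ?unitarymx_unit //.
  rewrite char_poly_diag map_prod_XsubC; apply: eq_bigr => j _.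
  by rewrite -[in LHS]Ea.
Qed.


Lemma sum_ind (R : nzRingType) (p k : nat) : (k <= p)%N ->
  \sum_(i < p) ((i < k)%N%:R : R) = k%:R.
Proof.
move=> kp; rewrite -natr_sum; congr (_%:R).
have H : forall q, \big[addn/0%N]_(i < q) nat_of_bool (i < k)%N = minn k q.
  elim=> [|q IH]; first by rewrite big_ord0 minn0.
  rewrite big_ord_recr /= IH; case: (ltnP q k) => h /=; lia.
by rewrite H; lia.
Qed.

Lemma weights (R : rcfType) (p : nat) (M V : 'M[R]_p) (k : nat) :
  M^T = M -> V^T *m V = 1%:M -> (k <= p)%N ->
  exists (a w : 'I_p -> R),
   [/\ char_poly M = \prod_j ('X - (a j)%:P),
       forall j, 0 <= w j <= 1,
       \sum_(j < p) w j = k%:R &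
       \sum_(i < p) (i < k)%N%:R * (V^T *m M *m V) i i = \sum_(j < p) a j * w j].
Proof.
move=> MT VV kp.
have [Q [a [QQ EM Ech]]] := spec_real MT.
set MV := MC R V.
set W := Q *m MV.
set Wc := map_mx Num.conj W^T.
have MVc : map_mx Num.conj MV = MV by apply/matrixP => i j; rewrite !mxE conj_toC.
have WcE : Wc = MV^T *m map_mx Num.conj Q^T.
  rewrite /Wc /W trmx_mul map_mxM; congr (_ *m _).
  by apply/matrixP => i j; rewrite !mxE; exact: conj_toC.
have VVt : V *m V^T = 1%:M by apply: mulmx1C.
have WW : W *m Wc = 1%:M.
  have MVV : MV *m MV^T = 1%:M by rewrite /MV map_trmx -map_mxM VVt map_mx1.
  by rewrite WcE /W -mulmxA (mulmxA MV) MVV mul1mx.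
have WcW : Wc *m W = 1%:M by apply: mulmx1C.
have EG : MC R (V^T *m M *m V) = Wc *m diag_mx (\row_j toC R (a j)) *m W.
  by rewrite !map_mxM -map_trmx EM WcE /W !mulmxA.
have WcE' i j : Wc i j = (W j i)^* by rewrite !mxE.
have Gii i : toC R ((V^T *m M *m V) i i) = \sum_j (W j i)^* * toC R (a j) * W j i.
  have := congr1 (fun A : 'M[R[i]]_p => A i i) EG; rewrite [in LHS]mxE => ->.
  rewrite mxE; apply: eq_bigr => j _; rewrite mul_mx_diag !mxE.
  by [].
have Wrow j : \sum_i W j i * (W j i)^* = 1.
  have := congr1 (fun A : 'M[R[i]]_p => A j j) WW; rewrite !mxE eqxx mulr1n => <-.
  by apply: eq_bigr => i _; rewrite WcE'.
have Wcol i : \sum_j (W j i)^* * W j i = 1.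
  have := congr1 (fun A : 'M[R[i]]_p => A i i) WcW; rewrite !mxE eqxx mulr1n => <-.
  by apply: eq_bigr => j _; rewrite WcE'.
pose e (i : 'I_p) : R := (i < k)%N%:R.
have eC i : 0 <= toC R (e i) <= 1.
  by rewrite ler0c lecR /e; case: (i < k)%N => /=; rewrite ?ler01 ?lexx.
pose om j := \sum_i toC R (e i) * (W j i * (W j i)^*).
have om_ge0 j : 0 <= om j.
  by apply: sumr_ge0 => i _; rewrite mulr_ge0 ?mul_conjC_ge0 //; case/andP: (eC i).
have om_le1 j : om j <= 1.
  rewrite -(Wrow j); apply: ler_sum => i _.
  by case/andP: (eC i) => e0 e1; rewrite ler_piMl // mul_conjC_ge0.
pose w j := complex.Re (om j).
have wE j : toC R (w j) = om j by apply: RRe_real; exact: ger0_real.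
exists a, w; split=> //.
- move=> j; apply/andP; split; first by rewrite -ler0c wE.
  by rewrite -lecR wE; have := om_le1 j; rewrite (rmorph1 (real_complex R)).
- apply: complexI; rewrite rmorph_sum /=.
  under eq_bigr do rewrite wE.
  rewrite /om exchange_big /=.
  under eq_bigr do rewrite -mulr_sumr.
  have Wcol' i : \sum_j W j i * (W j i)^* = 1.
    by rewrite -(Wcol i); apply: eq_bigr => j _; rewrite mulrC.
  under eq_bigr do rewrite Wcol' mulr1.
  by rewrite -rmorph_sum /e sum_ind.
- apply: complexI; rewrite !rmorph_sum /=.
  under eq_bigr do rewrite rmorphM /= Gii mulr_sumr.
  under [RHS]eq_bigr do rewrite rmorphM /= wE /om mulr_sumr.
  rewrite exchange_big /=; apply: eq_bigr => i _; apply: eq_bigr => j _.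
  rewrite /e; ring.
Qed.

Lemma rearr (R : realFieldType) (p k : nat) (s : seq R) (a w : 'I_p -> R) :
  sorted <=%R s -> perm_eq [seq a j | j <- enum 'I_p] s -> (0 < k)%N -> (k <= p)%N ->
  (forall j, 0 <= w j <= 1) -> \sum_j w j = k%:R ->
  \sum_(i < k) s`_i <= \sum_j a j * w j.
Proof.
move=> ss pe k0 kp w01 sw.
have sz : size s = p by rewrite -(perm_size pe) size_map size_enum_ord.
set c := s`_k.-1.
pose m (x : R) := if x <= c then x - c else 0.
have E1 : \sum_j a j * w j = \sum_j (a j - c) * w j + c * k%:R.
  rewrite -sw mulr_sumr -big_split /=; apply: eq_bigr => j _.
  by rewrite mulrBl subrK.
have E2 : \sum_j m (a j) <= \sum_j (a j - c) * w j.
  apply: ler_sum => j _; rewrite /m; have /andP[w0 w1] := w01 j.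
  case: ifP => h.
    rewrite -[X in X <= _]mulr1; apply: ler_wnM2l => //.
    by rewrite subr_le0.
  by rewrite mulr_ge0 // subr_ge0 ltW // ltNge h.
have mono : {in [pred n | (n < size s)%N] &,
    {homo nth 0 s : i j / (i <= j)%N >-> i <= j}}.
  exact: (sorted_leq_nth le_trans lexx 0 ss).
have E3 : \sum_j m (a j) = \sum_(i < k) (s`_i - c).
  have -> : \sum_j m (a j) = \sum_(x <- [seq a j | j <- enum 'I_p]) m x.
    by rewrite big_map big_enum.
  rewrite (perm_big _ pe) /=.
  rewrite (big_nth 0) big_mkord sz [RHS](big_ord_widen p (fun i => s`_i - c) kp).
  rewrite [RHS]big_mkcond /=; apply: eq_bigr => i _; rewrite /m.
  have lt_i : (i < p)%N := ltn_ord i.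
  case: (ltnP i k) => ik.
    have -> : s`_i <= c by apply: mono; rewrite ?inE ?sz //=; lia.
    by [].
  have ci : c <= s`_i by apply: mono; rewrite ?inE ?sz //=; lia.
  case: ifP => // h; apply/eqP; rewrite subr_eq0 eq_le h /=.
  by [].
rewrite E1; apply: (le_trans _ (lerD E2 (lexx (c * k%:R)))).
by rewrite E3 sumrB sumr_const card_ord mulr_natr subrK.
Qed.

Lemma eigvals_spec (R : rcfType) (p : nat) (M : 'M[R]_p) (a : 'I_p -> R) :
  char_poly M = \prod_j ('X - (a j)%:P) ->
  sorted <=%R (eigvals M) /\ perm_eq [seq a j | j <- enum 'I_p] (eigvals M).
Proof.
move=> E.
have Em : char_poly M = \prod_(x <- [seq a j | j <- enum 'I_p]) ('X - x%:P).
  by rewrite E big_map big_enum.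
set s0 := sort <=%R [seq a j | j <- enum 'I_p].
have H : sorted <=%R s0 /\ char_poly M = \prod_(x <- s0) ('X - x%:P).
  split; first by apply: sort_sorted; exact: le_total.
  by rewrite Em; apply/esym; apply: perm_big; rewrite perm_sort.
have [ss Ee] : sorted <=%R (eigvals M) /\
    char_poly M = \prod_(x <- eigvals M) ('X - x%:P).
  by rewrite /eigvals; apply epsilon_spec; exists s0.
split=> //; apply: prod_XsubC_eq; by rewrite -Em.
Qed.

Lemma PkE (R : rcfType) (p k : nat) (V : 'M[R]_p) :
  Pk k V = V *m diag_mx (\row_(i < p) ((i < k)%N%:R : R)) *m V^T.
Proof.
apply/matrixP => a b; rewrite /Pk summxE mxE big_mkcond /=.
apply: eq_bigr => i _; rewrite mul_mx_diag !mxE big_ord1 !mxE.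
by case: (i < k)%N; rewrite ?mulr1 ?mulr0 ?mul0r.
Qed.

Lemma E_bound (R : rcfType) (X : finType) (p : nat) (f : X -> 'cV[R]_p)
  (k : nat) (V : design R X -> 'M[R]_p) (mu xi : design R X) :
  (0 < k)%N -> (k <= p)%N -> ordered_eigenbasis (Minf f mu) (V mu) -> in_Xi xi ->
  phi_E f k xi <= \sum_x H_E f k V mu x * xi x.
Proof.
move=> k0 kp [VV _] _.
set U := V mu; set M := Minf f xi.
set D := diag_mx (\row_(i < p) ((i < k)%N%:R : R)).
have DD : D *m D = D.
  apply/matrixP => i j; rewrite mul_diag_mx !mxE.
  by case: eqP => _; case: (i < k)%N; rewrite /= ?mulr1 ?mulr0 ?mul1r.
have RHS : \sum_x H_E f k V mu x * xi x =
    \sum_(i < p) (i < k)%N%:R * (U^T *m M *m U) i i.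
  have PP : (U *m D *m U^T)^T *m (U *m D *m U^T) = U *m D *m U^T.
    rewrite !trmx_mul trmxK tr_diag_mx -/D !mulmxA.
    by rewrite -(mulmxA _ U^T U) VV mulmx1 -(mulmxA _ D D) DD.
  rewrite /H_E -/U sum_sqnorm PkE -/D PP -/M.
  rewrite mxtrace_mulC !mulmxA mxtrace_mulC !mulmxA mxtrace_mulC mul_diag_mx /mxtrace.
  by apply: eq_bigr => i _; rewrite !mxE.
rewrite RHS.
have [a [w [Ech w01 sw EQ]]] := weights (Minf_sym f xi) VV kp.
have [ss pe] := eigvals_spec Ech.
rewrite /phi_E -/M EQ.
have sz : size (eigvals M) = p by rewrite -(perm_size pe) size_map size_enum_ord.
exact: (rearr ss pe k0 kp w01 sw).
Qed.


Theorem mainTheorem4 (R : rcfType) (X : finType) (p : nat) (f : X -> 'cV[R]_p) :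
  (0 < p)%N ->
  [/\
   (* (H_D, Xi^+), phi_D *)
   forall (Xs : seq (design R X)) (xi' : design R X) (t' : R),
     Xs != [::] -> (forall mu, mu \in Xs -> in_Xiplus f mu) ->
     lp_optimal Xs (H_D f) xi' t' -> in_Xiplus f xi' ->
     phi_D f xi' <= t' /\ (forall xi, in_Xiplus f xi -> phi_D f xi <= t'),
   (* (H_A, Xi^+), phi_A *)
   forall (Xs : seq (design R X)) (xi' : design R X) (t' : R),
     Xs != [::] -> (forall mu, mu \in Xs -> in_Xiplus f mu) ->
     lp_optimal Xs (H_A f) xi' t' -> in_Xiplus f xi' ->
     phi_A f xi' <= t' /\ (forall xi, in_Xiplus f xi -> phi_A f xi <= t')
   &
   (* (H_{E_k}, Xi), phi_{E_k} *)
   forall (k : nat) (V : design R X -> 'M[R]_p)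
          (Xs : seq (design R X)) (xi' : design R X) (t' : R),
     (0 < k)%N -> (k <= p)%N ->
     Xs != [::] -> (forall mu, mu \in Xs -> in_Xi mu) ->
     (forall mu, mu \in Xs -> ordered_eigenbasis (Minf f mu) (V mu)) ->
     lp_optimal Xs (H_E f k V) xi' t' -> in_Xi xi' ->
     phi_E f k xi' <= t' /\ (forall xi, in_Xi xi -> phi_E f k xi <= t')].
Proof.
move=> p0; split.
- move=> Xs xi' t' _ HXs [_ opt] Hxi'.
  have key : forall xi, in_Xiplus f xi -> phi_D f xi <= t'.
    move=> xi Hxi; apply: (opt xi (phi_D f xi)); split; first by case: Hxi.
    by move=> mu muin; exact: D_bound p0 (HXs mu muin) Hxi.
  by split=> //; apply: key.
- move=> Xs xi' t' _ HXs [_ opt] Hxi'.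
  have key : forall xi, in_Xiplus f xi -> phi_A f xi <= t'.
    move=> xi Hxi; apply: (opt xi (phi_A f xi)); split; first by case: Hxi.
    by move=> mu muin; exact: A_bound p0 (HXs mu muin) Hxi.
  by split=> //; apply: key.
- move=> k V Xs xi' t' k0 kp _ HXs HV [_ opt] Hxi'.
  have key : forall xi, in_Xi xi -> phi_E f k xi <= t'.
    move=> xi Hxi; apply: (opt xi (phi_E f k xi)); split=> //.
    by move=> mu muin; exact: E_bound k0 kp (HV mu muin) Hxi.
  by split=> //; apply: key.
Qed.
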